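(* Let $\gamma>-1/2$. For every $a\in\mathbb{C}$ with $\operatorname{Im}(a)\neq0$, \[ (2\gamma+1)\frac{|{}_1F_1(\gamma;2\gamma+1;ia)|^2-|{}_1F_1(1+\gamma;2\gamma+1;ia)|^2}{2\operatorname{Im}(a)}>0, \] and for every $a\in\mathbb{R}$, $T(a)>0$, where \[ T(a)={}_1F_1(1+\gamma;2\gamma+1;-ia)\,{}_1F_1(2+\gamma;2\gamma+2;ia)(1+\gamma)-{}_1F_1(\gamma;2\gamma+1;-ia)\,{}_1F_1(1+\gamma;2\gamma+2;ia)\,\gamma . \]
   Context: ${}_1F_1(\alpha;\beta;z)=\sum_{k\ge0}\frac{(\alpha)_k}{(\beta)_k}\frac{z^k}{k!}$ is the confluent hypergeometric function, with $(v)_k$ the rising factorial. (For real $a$ the paper interprets the displayed quotient as $T(a)$.) *)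

(* Defs.v *)
From Stdlib Require Import Reals Factorial.
From Coquelicot Require Import Coquelicot.
Open Scope R_scope.

Fixpoint poch (v : C) (k : nat) : C :=
  match k with
  | O => RtoC 1
  | S k' => Cmult (poch v k') (Cplus v (RtoC (INR k')))
  end.

Fixpoint cpow (z : C) (k : nat) : C :=
  match k with
  | O => RtoC 1
  | S k' => Cmult (cpow z k') z
  end.

Definition hyp1F1_term (alpha beta z : C) (k : nat) : C :=
  Cdiv (Cmult (Cdiv (poch alpha k) (poch beta k)) (cpow z k)) (RtoC (INR (Factorial.fact k))).

Definition hyp1F1 (alpha beta z : C) : C :=
  (Series (fun k => Re (hyp1F1_term alpha beta z k)),
   Series (fun k => Im (hyp1F1_term alpha beta z k))).

Definition Tq (g a : R) : C :=
  Cminus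
    (Cmult (Cmult (hyp1F1 (RtoC (1 + g)) (RtoC (2 * g + 1)) (Cmult (RtoC (- a)) Ci))
                  (hyp1F1 (RtoC (2 + g)) (RtoC (2 * g + 2)) (Cmult (RtoC a) Ci)))
           (RtoC (1 + g)))
    (Cmult (Cmult (hyp1F1 (RtoC g) (RtoC (2 * g + 1)) (Cmult (RtoC (- a)) Ci))
                  (hyp1F1 (RtoC (1 + g)) (RtoC (2 * g + 2)) (Cmult (RtoC a) Ci)))
           (RtoC g)).

(* Main.v *)
Require Import Defs.
From Stdlib Require Import Reals Lra Lia Psatz.
From Coquelicot Require Import Coquelicot.
Open Scope R_scope.

Fixpoint rpoch (r : R) (k : nat) : R :=
  match k with O => 1 | S k' => rpoch r k' * (r + INR k') end.

Lemma poch_R r k : poch (RtoC r) k = RtoC (rpoch r k).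
Proof.
  induction k as [|k IH]; simpl; [reflexivity|].
  rewrite IH, <- RtoC_plus, <- RtoC_mult; reflexivity.
Qed.

Lemma rpoch_pos r k : 0 < r -> 0 < rpoch r k.
Proof.
  intros Hr; induction k as [|k IH]; simpl; [lra|].
  apply Rmult_lt_0_compat; auto. pose proof (pos_INR k); lra.
Qed.

Lemma rpoch_shift r k : rpoch r (S k) = r * rpoch (r + 1) k.
Proof.
  induction k as [|k IH]; [simpl; ring|].
  change (rpoch r (S (S k))) with (rpoch r (S k) * (r + INR (S k))).
  change (rpoch (r+1) (S k)) with (rpoch (r+1) k * (r + 1 + INR k)).
  rewrite IH, S_INR. ring.
Qed.

Definition coef (al be : R) (n : nat) : R :=
  rpoch al n / rpoch be n / INR (Factorial.fact n).

Lemma term_re al be z n : rpoch be n <> 0 ->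
  Re (hyp1F1_term (RtoC al) (RtoC be) z n) = coef al be n * Re (cpow z n).
Proof.
  intros H. unfold hyp1F1_term, coef. rewrite !poch_R.
  pose proof (INR_fact_neq_0 n).
  destruct (cpow z n) as [r i].
  unfold Cdiv, Cmult, Cinv, RtoC, Re, Im; simpl. field. lra.
Qed.

Lemma term_im al be z n : rpoch be n <> 0 ->
  Im (hyp1F1_term (RtoC al) (RtoC be) z n) = coef al be n * Im (cpow z n).
Proof.
  intros H. unfold hyp1F1_term, coef. rewrite !poch_R.
  pose proof (INR_fact_neq_0 n).
  destruct (cpow z n) as [r i].
  unfold Cdiv, Cmult, Cinv, RtoC, Re, Im; simpl. field. lra.
Qed.
Lemma fact_S_INR n : INR (Factorial.fact (S n)) = (INR n + 1) * INR (Factorial.fact n).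
Proof. change (Factorial.fact (S n)) with (S n * Factorial.fact n)%nat. rewrite mult_INR, S_INR. ring. Qed.

Lemma rpoch_S r n : rpoch r (S n) = rpoch r n * (r + INR n).
Proof. reflexivity. Qed.

Section Ids.
Variable g : R.
Hypothesis hg : -1/2 < g.
Let b := 2*g+1.
Lemma b_pos : 0 < b. Proof. unfold b; lra. Qed.

Lemma I1 n : INR n * coef g b n = g * (coef (1+g) b n - coef g b n).
Proof.
  unfold coef.
  assert (H : g * rpoch (1+g) n = rpoch g n * (g + INR n)).
  { rewrite <- rpoch_S, rpoch_shift. replace (g+1) with (1+g) by ring. ring. }
  pose proof (rpoch_pos b n b_pos). pose proof (INR_fact_neq_0 n).
  replace (g * (rpoch (1 + g) n / rpoch b n / INR (Factorial.fact n) -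
     rpoch g n / rpoch b n / INR (Factorial.fact n)))
    with ((g * rpoch (1 + g) n - g * rpoch g n) / rpoch b n / INR (Factorial.fact n))
    by (field; lra).
  rewrite H. field. lra.
Qed.

Lemma I2 n : INR (S n) * coef (1+g) b (S n) = g * (coef g b (S n) - coef (1+g) b (S n)) + coef (1+g) b n.
Proof.
  unfold coef. rewrite !fact_S_INR, !S_INR.
  rewrite (rpoch_shift g n). replace (g+1) with (1+g) by ring.
  rewrite !rpoch_S.
  pose proof (rpoch_pos b n b_pos). pose proof (INR_fact_neq_0 n). pose proof (pos_INR n).
  unfold b in *. field. repeat split; lra.
Qed.

Lemma I3 n : (1+g) * coef (2+g) (2*g+2) n = b * INR (S n) * coef (1+g) b (S n).
Proof.
  unfold coef. rewrite !fact_S_INR, !S_INR.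
  rewrite (rpoch_shift (1+g) n), (rpoch_shift b n).
  replace (1+g+1) with (2+g) by ring. replace (b+1) with (2*g+2) by (unfold b; ring).
  pose proof (rpoch_pos (2*g+2) n ltac:(lra)). pose proof (INR_fact_neq_0 n). pose proof (pos_INR n).
  unfold b in *. field. repeat split; lra.
Qed.

Lemma I4 n : g * coef (1+g) (2*g+2) n = b * INR (S n) * coef g b (S n).
Proof.
  unfold coef. rewrite !fact_S_INR, !S_INR.
  rewrite (rpoch_shift g n), (rpoch_shift b n).
  replace (g+1) with (1+g) by ring. replace (b+1) with (2*g+2) by (unfold b; ring).
  pose proof (rpoch_pos (2*g+2) n ltac:(lra)). pose proof (INR_fact_neq_0 n). pose proof (pos_INR n).
  unfold b in *. field. repeat split; lra.
Qed.
End Ids.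
Definition RE (z : C) (n : nat) : R := Re (cpow z n).
Definition IM (z : C) (n : nat) : R := Im (cpow z n).

Lemma RE_S z n : RE z (S n) = RE z n * Re z - IM z n * Im z.
Proof. unfold RE, IM; simpl. destruct (cpow z n), z; simpl. reflexivity. Qed.
Lemma IM_S z n : IM z (S n) = RE z n * Im z + IM z n * Re z.
Proof. unfold RE, IM; simpl. destruct (cpow z n), z; simpl. reflexivity. Qed.
Lemma RE_0 z : RE z 0 = 1. Proof. reflexivity. Qed.
Lemma IM_0 z : IM z 0 = 0. Proof. reflexivity. Qed.

Lemma cpow_bound z n : Rabs (RE z n) <= (Rabs (Re z) + Rabs (Im z)) ^ n /\
                       Rabs (IM z n) <= (Rabs (Re z) + Rabs (Im z)) ^ n.
Proof.
  induction n as [|n [H1 H2]].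
  - rewrite RE_0, IM_0, Rabs_R1, Rabs_R0. simpl. lra.
  - rewrite RE_S, IM_S. simpl.
    pose proof (Rabs_pos (Re z)). pose proof (Rabs_pos (Im z)).
    pose proof (Rabs_pos (RE z n)). pose proof (Rabs_pos (IM z n)).
    split.
    + eapply Rle_trans; [apply Rabs_triang|]. rewrite Rabs_Ropp, !Rabs_mult.
      assert (Rabs (RE z n) * Rabs (Re z) <= (Rabs (Re z) + Rabs (Im z)) ^ n * Rabs (Re z)) by (apply Rmult_le_compat_r; auto).
      assert (Rabs (IM z n) * Rabs (Im z) <= (Rabs (Re z) + Rabs (Im z)) ^ n * Rabs (Im z)) by (apply Rmult_le_compat_r; auto).
      lra.
    + eapply Rle_trans; [apply Rabs_triang|]. rewrite !Rabs_mult.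
      assert (Rabs (RE z n) * Rabs (Im z) <= (Rabs (Re z) + Rabs (Im z)) ^ n * Rabs (Im z)) by (apply Rmult_le_compat_r; auto).
      assert (Rabs (IM z n) * Rabs (Re z) <= (Rabs (Re z) + Rabs (Im z)) ^ n * Rabs (Re z)) by (apply Rmult_le_compat_r; auto).
      lra.
Qed.

Lemma coef_rec al be n : 0 < be ->
  coef al be (S n) = coef al be n * ((al + INR n) / ((be + INR n) * (INR n + 1))).
Proof.
  intros Hb. unfold coef. rewrite fact_S_INR, !rpoch_S.
  pose proof (rpoch_pos be n Hb). pose proof (INR_fact_neq_0 n). pose proof (pos_INR n).
  field. repeat split; lra.
Qed.

Fixpoint edom (c be : R) (n : nat) : R :=
  match n with O => 1 | S n => edom c be n * ((c + INR n) / ((be + INR n) * (INR n + 1))) end.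

Lemma edom_pos c be n : 0 < c -> 0 < be -> 0 < edom c be n.
Proof.
  intros Hc Hb; induction n; simpl; [lra|]. pose proof (pos_INR n).
  apply Rmult_lt_0_compat; auto. apply Rdiv_lt_0_compat; [lra|]. apply Rmult_lt_0_compat; lra.
Qed.

Lemma coef_dom al be n : 0 < be -> Rabs (coef al be n) <= edom (Rabs al + 1) be n.
Proof.
  intros Hb. induction n as [|n IH].
  - unfold coef; simpl. rewrite Rabs_pos_eq; lra.
  - rewrite coef_rec by auto. simpl. rewrite Rabs_mult.
    pose proof (pos_INR n).
    apply Rmult_le_compat; [apply Rabs_pos|apply Rabs_pos|auto|].
    rewrite Rabs_div. rewrite (Rabs_pos_eq ((be + INR n) * (INR n + 1))) by (apply Rmult_le_pos; lra).
    apply Rmult_le_compat_r. apply Rlt_le, Rinv_0_lt_compat, Rmult_lt_0_compat; lra.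
    eapply Rle_trans; [apply Rabs_triang|]. rewrite (Rabs_pos_eq (INR n)) by lra. lra.
    apply Rgt_not_eq, Rmult_lt_0_compat; lra.
Qed.

Lemma CV_radius_dom (a f : nat -> R) : (forall n, Rabs (a n) <= Rabs (f n)) ->
  CV_radius f = p_infty -> CV_radius a = p_infty.
Proof.
  intros Hd Hf.
  pose proof (CV_radius_bounded a) as [Ha1 Ha2].
  pose proof (CV_radius_bounded f) as [Hf1 Hf2].
  rewrite Hf in Hf2.
  assert (Rbar_le p_infty (CV_radius a)).
  { apply Hf2. intros x [M HM]. apply Ha1. exists M. intros n.
    eapply Rle_trans; [|apply (HM n)]. rewrite !Rabs_mult. apply Rmult_le_compat_r; auto. apply Rabs_pos. }
  destruct (CV_radius a); simpl in H; tauto.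
Qed.

Lemma edom_radius c be M : 1 <= c -> 0 < be -> 0 < M ->
  CV_radius (fun n => edom c be n * M ^ n) = p_infty.
Proof.
  intros Hc Hb HM. apply CV_radius_infinite_DAlembert.
  - intros n. apply Rgt_not_eq, Rmult_lt_0_compat; [apply edom_pos; lra|apply pow_lt; auto].
  - apply is_lim_seq_le_le with (u := fun _ => 0) (w := fun n => (M * c) * / (be + INR n)).
    + intros n. simpl. pose proof (pos_INR n). pose proof (edom_pos c be n ltac:(lra) Hb).
      pose proof (pow_lt M n HM).
      replace (edom c be n * ((c + INR n) / ((be + INR n) * (INR n + 1))) * (M * M ^ n) /
                (edom c be n * M ^ n)) with (M * ((c + INR n) / ((be + INR n) * (INR n + 1)))) by (field; lra).
      rewrite Rabs_pos_eq.
      2:{ apply Rmult_le_pos; [lra|]. apply Rlt_le, Rdiv_lt_0_compat; [lra|]. apply Rmult_lt_0_compat; lra. }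
      split.
      * apply Rmult_le_pos; [lra|]. apply Rlt_le, Rdiv_lt_0_compat; [lra|]. apply Rmult_lt_0_compat; lra.
      * unfold Rdiv. rewrite Rinv_mult.
        replace (M * ((c + INR n) * (/ (be + INR n) * / (INR n + 1)))) with
          (M * / (be + INR n) * ((c + INR n) * / (INR n + 1))) by ring.
        replace (M * c * / (be + INR n)) with (M * / (be + INR n) * c) by ring.
        apply Rmult_le_compat_l. apply Rmult_le_pos; [lra|]. apply Rlt_le, Rinv_0_lt_compat; lra.
        apply (Rmult_le_reg_r (INR n + 1)); [lra|]. rewrite Rmult_assoc, Rinv_l by lra. nra.
    + apply is_lim_seq_const.
    + replace (Finite 0) with (Rbar_mult (M*c) 0) by (simpl; f_equal; ring).
      apply is_lim_seq_scal_l.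
      replace (Finite 0) with (Rbar_inv p_infty) by reflexivity.
      apply is_lim_seq_inv; [|discriminate].
      apply is_lim_seq_plus with (l1 := be) (l2 := p_infty).
      apply is_lim_seq_const. apply is_lim_seq_INR. simpl. constructor.
Qed.

Lemma entire_RE al be z : 0 < be -> CV_radius (fun n => coef al be n * RE z n) = p_infty.
Proof.
  intros Hb. apply CV_radius_dom with (f := fun n => edom (Rabs al + 1) be n * (Rabs (Re z) + Rabs (Im z) + 1) ^ n).
  - intros n. rewrite !Rabs_mult. rewrite (Rabs_pos_eq (edom _ _ _)) by (apply Rlt_le, edom_pos; [pose proof (Rabs_pos al); lra|auto]).
    apply Rmult_le_compat; try apply Rabs_pos. apply coef_dom; auto.
    destruct (cpow_bound z n) as [H _]. eapply Rle_trans; [apply H|].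
    rewrite (Rabs_pos_eq ((Rabs (Re z) + Rabs (Im z) + 1) ^ n)) by (apply pow_le; pose proof (Rabs_pos (Re z)); pose proof (Rabs_pos (Im z)); lra).
    apply pow_incr. pose proof (Rabs_pos (Re z)); pose proof (Rabs_pos (Im z)); lra.
  - apply edom_radius; auto. pose proof (Rabs_pos al); lra. pose proof (Rabs_pos (Re z)); pose proof (Rabs_pos (Im z)); lra.
Qed.

Lemma entire_IM al be z : 0 < be -> CV_radius (fun n => coef al be n * IM z n) = p_infty.
Proof.
  intros Hb. apply CV_radius_dom with (f := fun n => edom (Rabs al + 1) be n * (Rabs (Re z) + Rabs (Im z) + 1) ^ n).
  - intros n. rewrite !Rabs_mult. rewrite (Rabs_pos_eq (edom _ _ _)) by (apply Rlt_le, edom_pos; [pose proof (Rabs_pos al); lra|auto]).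
    apply Rmult_le_compat; try apply Rabs_pos. apply coef_dom; auto.
    destruct (cpow_bound z n) as [_ H]. eapply Rle_trans; [apply H|].
    rewrite (Rabs_pos_eq ((Rabs (Re z) + Rabs (Im z) + 1) ^ n)) by (apply pow_le; pose proof (Rabs_pos (Re z)); pose proof (Rabs_pos (Im z)); lra).
    apply pow_incr. pose proof (Rabs_pos (Re z)); pose proof (Rabs_pos (Im z)); lra.
  - apply edom_radius; auto. pose proof (Rabs_pos al); lra. pose proof (Rabs_pos (Re z)); pose proof (Rabs_pos (Im z)); lra.
Qed.
Lemma hyp_eq al be z : 0 < be ->
  hyp1F1 (RtoC al) (RtoC be) z =
  (PSeries (fun n => coef al be n * RE z n) 1, PSeries (fun n => coef al be n * IM z n) 1).
Proof.
  intros Hb. unfold hyp1F1, PSeries. f_equal; apply Series_ext; intros n; rewrite pow1, Rmult_1_r.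
  - apply term_re. apply Rgt_not_eq, rpoch_pos; auto.
  - apply term_im. apply Rgt_not_eq, rpoch_pos; auto.
Qed.

Lemma D_eq (f : R -> R) (x l l' : R) : is_derive f x l -> l = l' -> is_derive f x l'.
Proof. intros H ->; exact H. Qed.
Lemma D_mult (f g : R -> R) (x df dg : R) : is_derive f x df -> is_derive g x dg ->
  is_derive (fun t => f t * g t) x (df * g x + f x * dg).
Proof. intros. apply (is_derive_mult f g x df dg); auto. intros; apply Rmult_comm. Qed.
Lemma D_plus (f g : R -> R) (x df dg : R) : is_derive f x df -> is_derive g x dg ->
  is_derive (fun t => f t + g t) x (df + dg).
Proof. intros. apply (is_derive_plus f g x df dg); auto. Qed.
Lemma D_minus (f g : R -> R) (x df dg : R) : is_derive f x df -> is_derive g x dg ->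
  is_derive (fun t => f t - g t) x (df - dg).
Proof. intros. apply (is_derive_minus f g x df dg); auto. Qed.
Lemma D_scal (f : R -> R) (x k df : R) : is_derive f x df -> is_derive (fun t => k * f t) x (k * df).
Proof. intros. apply is_derive_scal; auto. Qed.
Lemma D_id x : is_derive (fun t : R => t) x 1.
Proof. apply (is_derive_id x). Qed.

Lemma pos_near0 (f : R -> R) (l : R) : is_derive f 0 l -> 0 < l -> f 0 = 0 -> exists e, 0 < e < 1 /\ 0 < f e.
Proof.
  intros Hd Hl H0. apply is_derive_Reals in Hd.
  destruct (Hd (l/2) ltac:(lra)) as [d Hdd].
  set (h := Rmin (d/2) (1/2)).
  assert (Hh : 0 < h) by (unfold h; apply Rmin_pos; [pose proof (cond_pos d)|]; lra).
  assert (Hh2 : h <= d/2) by apply Rmin_l. assert (Hh3 : h <= 1/2) by apply Rmin_r.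
  exists h. split; [lra|].
  specialize (Hdd h ltac:(lra)). assert (Rabs h < d) by (rewrite Rabs_pos_eq; pose proof (cond_pos d); lra).
  specialize (Hdd H). rewrite Rplus_0_l, H0, Rminus_0_r in Hdd.
  apply Rabs_def2 in Hdd. destruct Hdd as [_ Hdd].
  assert (0 < f h / h) by lra.
  replace (f h) with (f h / h * h) by (field; lra). apply Rmult_lt_0_compat; lra.
Qed.

Lemma mono (c : R) (f f' : R -> R) :
  (forall s, is_derive f s (f' s)) -> f 0 = 0 -> 0 < f' 0 ->
  (forall s, 0 < s <= 1 -> 0 <= s * f' s + c * f s) -> 0 < f 1.
Proof.
  intros Hd H0 Hp Hs.
  destruct (pos_near0 f (f' 0) (Hd 0) Hp H0) as [e [He Hfe]].
  set (H := fun s => exp (c * ln s) * f s).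
  set (H' := fun s => exp (c * ln s) * (c * / s) * f s + exp (c * ln s) * f' s).
  destruct (MVT_cor2 H H' e 1) as [xi [Hxi1 Hxi2]]; [lra| |].
  - intros s Hs'. apply is_derive_Reals. unfold H, H'.
    apply (D_mult (fun t => exp (c * ln t)) f); [|apply Hd].
    eapply D_eq.
    apply (is_derive_comp exp (fun t => c * ln t)). apply is_derive_exp.
    apply D_scal. apply is_derive_ln; lra.
    unfold scal; simpl; unfold mult; simpl; ring.
  - assert (0 <= H' xi).
    { unfold H'. replace (exp (c * ln xi) * (c * / xi) * f xi + exp (c * ln xi) * f' xi)
        with (exp (c * ln xi) * / xi * (xi * f' xi + c * f xi)) by (field; lra).
      apply Rmult_le_pos. apply Rmult_le_pos. apply Rlt_le, exp_pos. apply Rlt_le, Rinv_0_lt_compat; lra.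
      apply Hs; lra. }
    assert (0 < H e) by (unfold H; apply Rmult_lt_0_compat; [apply exp_pos|auto]).
    assert (H 1 = f 1) by (unfold H; rewrite ln_1, Rmult_0_r, exp_0; ring).
    assert (0 <= H' xi * (1 - e)) by (apply Rmult_le_pos; lra).
    lra.
Qed.

Lemma weak (c : R) (f f' : R -> R) : -1 < c ->
  (forall s, is_derive f s (f' s)) -> f 0 = 0 -> 0 <= f' 0 ->
  (forall s, 0 < s <= 1 -> 0 <= s * f' s + c * f s) -> 0 <= f 1.
Proof.
  intros Hc Hd H0 Hp Hs.
  apply Rnot_lt_le. intros Hneg.
  set (d := - f 1 / 2).
  assert (0 < f 1 + d * 1).
  { apply (mono c (fun t => f t + d * t) (fun t => f' t + d)).
    - intros s. apply D_plus; auto. eapply D_eq. apply D_scal, D_id. ring.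
    - rewrite H0; ring.
    - unfold d; lra.
    - intros s Hs'. specialize (Hs s Hs').
      replace (s * (f' s + d) + c * (f s + d * s)) with ((s * f' s + c * f s) + d * s * (1 + c)) by ring.
      apply Rplus_le_le_0_compat; auto. apply Rmult_le_pos; [|lra]. apply Rmult_le_pos; unfold d; lra. }
  unfold d in H. lra.
Qed.

Lemma zero (c : R) (f f' : R -> R) : -1 < c ->
  (forall s, is_derive f s (f' s)) -> f 0 = 0 -> f' 0 = 0 ->
  (forall s, 0 < s <= 1 -> s * f' s + c * f s = 0) -> f 1 = 0.
Proof.
  intros Hc Hd H0 Hp Hs.
  assert (0 <= f 1) by (apply (weak c f f'); auto; [lra|intros s Hs'; rewrite Hs; auto; lra]).
  assert (0 <= - f 1).
  { apply (weak c (fun t => - f t) (fun t => - f' t)); auto.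
    - intros s. eapply D_eq. eapply is_derive_ext; [|exact (D_scal f s (-1) (f' s) (Hd s))].
      intros t; simpl; ring. ring.
    - rewrite H0; ring.
    - lra.
    - intros s Hs'. specialize (Hs s Hs'). lra. }
  lra.
Qed.
Lemma lin2 (a c : nat -> R) (k1 k2 s : R) : ex_pseries a s -> ex_pseries c s ->
  ex_pseries (fun n => k1 * a n + k2 * c n) s /\
  PSeries (fun n => k1 * a n + k2 * c n) s = k1 * PSeries a s + k2 * PSeries c s.
Proof.
  intros Ha Hc.
  assert (E1 : ex_pseries (PS_scal k1 a) s) by (apply ex_pseries_scal; auto; apply Rmult_comm).
  assert (E2 : ex_pseries (PS_scal k2 c) s) by (apply ex_pseries_scal; auto; apply Rmult_comm).
  split.
  - eapply ex_pseries_ext; [|apply (ex_pseries_plus _ _ _ E1 E2)]. intros n; reflexivity.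
  - rewrite <- (PSeries_scal k1 a), <- (PSeries_scal k2 c), <- PSeries_plus by auto.
    apply PSeries_ext. intros n; reflexivity.
Qed.

Lemma coef_0 al be : coef al be 0 = 1.
Proof. unfold coef; simpl. field. Qed.
Lemma coef_1 al be : 0 < be -> coef al be 1 = al / be.
Proof. intros. unfold coef; simpl. field. lra. Qed.

Definition uA g z n := coef g (2*g+1) n * RE z n.
Definition uB g z n := coef g (2*g+1) n * IM z n.
Definition vC g z n := coef (1+g) (2*g+1) n * RE z n.
Definition vD g z n := coef (1+g) (2*g+1) n * IM z n.

Section Main.
Variable g : R.
Hypothesis hg : -1/2 < g.
Variable z : C.
Let b := 2*g+1.
Let p := Re z.
Let q := Im z.
Lemma bpos : 0 < b. Proof. unfold b; lra. Qed.

Lemma rad_uA : CV_radius (uA g z) = p_infty. Proof. apply entire_RE, bpos. Qed.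
Lemma rad_uB : CV_radius (uB g z) = p_infty. Proof. apply entire_IM, bpos. Qed.
Lemma rad_vC : CV_radius (vC g z) = p_infty. Proof. apply entire_RE, bpos. Qed.
Lemma rad_vD : CV_radius (vD g z) = p_infty. Proof. apply entire_IM, bpos. Qed.

Ltac exps := apply CV_radius_inside; rewrite ?CV_radius_decr_1, ?CV_radius_derive,
   ?rad_uA, ?rad_uB, ?rad_vC, ?rad_vD; simpl; exact I.

Definition U1 s := PSeries (uA g z) s.
Definition U2 s := PSeries (uB g z) s.
Definition V1 s := PSeries (vC g z) s.
Definition V2 s := PSeries (vD g z) s.
Definition U1d s := PSeries (PS_derive (uA g z)) s.
Definition U2d s := PSeries (PS_derive (uB g z)) s.
Definition V1d s := PSeries (PS_derive (vC g z)) s.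
Definition V2d s := PSeries (PS_derive (vD g z)) s.

Lemma dU1 s : is_derive U1 s (U1d s).
Proof. apply is_derive_PSeries. rewrite rad_uA; exact I. Qed.
Lemma dU2 s : is_derive U2 s (U2d s).
Proof. apply is_derive_PSeries. rewrite rad_uB; exact I. Qed.
Lemma dV1 s : is_derive V1 s (V1d s).
Proof. apply is_derive_PSeries. rewrite rad_vC; exact I. Qed.
Lemma dV2 s : is_derive V2 s (V2d s).
Proof. apply is_derive_PSeries. rewrite rad_vD; exact I. Qed.

Lemma ode1 s : s * U1d s = g * (V1 s - U1 s).
Proof.
  unfold U1d, U1, V1.
  rewrite (PSeries_ext (PS_derive (uA g z)) (fun n => g * PS_decr_1 (vC g z) n + (-g) * PS_decr_1 (uA g z) n)).
  2:{ intros n. unfold PS_derive, PS_decr_1, uA, vC. rewrite <- Rmult_assoc, I1 by lra. ring. }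
  destruct (lin2 (PS_decr_1 (vC g z)) (PS_decr_1 (uA g z)) g (-g) s) as [_ ->]; try exps.
  rewrite (PSeries_decr_1 (vC g z) s), (PSeries_decr_1 (uA g z) s) by exps.
  unfold vC, uA. rewrite !coef_0, !RE_0. ring.
Qed.

Lemma ode2 s : s * U2d s = g * (V2 s - U2 s).
Proof.
  unfold U2d, U2, V2.
  rewrite (PSeries_ext (PS_derive (uB g z)) (fun n => g * PS_decr_1 (vD g z) n + (-g) * PS_decr_1 (uB g z) n)).
  2:{ intros n. unfold PS_derive, PS_decr_1, uB, vD. rewrite <- Rmult_assoc, I1 by lra. ring. }
  destruct (lin2 (PS_decr_1 (vD g z)) (PS_decr_1 (uB g z)) g (-g) s) as [_ ->]; try exps.
  rewrite (PSeries_decr_1 (vD g z) s), (PSeries_decr_1 (uB g z) s) by exps.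
  unfold vD, uB. rewrite !coef_0, !IM_0. ring.
Qed.

Lemma ode3 s : s * V1d s = g * (U1 s - V1 s) + s * (p * V1 s - q * V2 s).
Proof.
  unfold V1d, U1, V1, V2.
  rewrite (PSeries_ext (PS_derive (vC g z))
    (fun n => 1 * (fun m => g * PS_decr_1 (uA g z) m + (-g) * PS_decr_1 (vC g z) m) n
            + 1 * (fun m => p * vC g z m + (-q) * vD g z m) n)).
  2:{ intros n. unfold PS_derive, PS_decr_1, uA, vC, vD. rewrite <- Rmult_assoc, I2 by lra. rewrite RE_S.
      unfold p, q. ring. }
  destruct (lin2 (PS_decr_1 (uA g z)) (PS_decr_1 (vC g z)) g (-g) s) as [E1 Q1]; try exps.
  destruct (lin2 (vC g z) (vD g z) p (-q) s) as [E2 Q2]; try exps.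
  destruct (lin2 _ _ 1 1 s E1 E2) as [_ ->]. rewrite Q1, Q2.
  rewrite (PSeries_decr_1 (vC g z) s), (PSeries_decr_1 (uA g z) s) by exps.
  unfold vC, uA. rewrite !coef_0, !RE_0. ring.
Qed.

Lemma ode4 s : s * V2d s = g * (U2 s - V2 s) + s * (q * V1 s + p * V2 s).
Proof.
  unfold V2d, U2, V1, V2.
  rewrite (PSeries_ext (PS_derive (vD g z))
    (fun n => 1 * (fun m => g * PS_decr_1 (uB g z) m + (-g) * PS_decr_1 (vD g z) m) n
            + 1 * (fun m => q * vC g z m + p * vD g z m) n)).
  2:{ intros n. unfold PS_derive, PS_decr_1, uB, vC, vD. rewrite <- Rmult_assoc, I2 by lra. rewrite IM_S.
      unfold p, q. ring. }
  destruct (lin2 (PS_decr_1 (uB g z)) (PS_decr_1 (vD g z)) g (-g) s) as [E1 Q1]; try exps.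
  destruct (lin2 (vC g z) (vD g z) q p s) as [E2 Q2]; try exps.
  destruct (lin2 _ _ 1 1 s E1 E2) as [_ ->]. rewrite Q1, Q2.
  rewrite (PSeries_decr_1 (vD g z) s), (PSeries_decr_1 (uB g z) s) by exps.
  unfold vD, uB. rewrite !coef_0, !IM_0. ring.
Qed.

Lemma PSd0 (a : nat -> R) : PSeries (PS_derive a) 0 = a 1%nat.
Proof. rewrite PSeries_0. unfold PS_derive. simpl. ring. Qed.

Lemma at0 : U1 0 = 1 /\ U2 0 = 0 /\ V1 0 = 1 /\ V2 0 = 0 /\
  U1d 0 = g / b * p /\ U2d 0 = g / b * q /\ V1d 0 = (1+g)/b * p /\ V2d 0 = (1+g)/b*q.
Proof.
  unfold U1, U2, V1, V2, U1d, U2d, V1d, V2d. rewrite !PSd0, !PSeries_0.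
  unfold uA, uB, vC, vD. rewrite !coef_0, !coef_1 by (apply bpos).
  rewrite !RE_S, !IM_S, RE_0, IM_0. fold b p q.
  repeat split; ring.
Qed.

Definition W s := U1 s*U1 s + U2 s*U2 s - V1 s*V1 s - V2 s*V2 s.
Definition Wd s := 2*(U1 s*U1d s + U2 s*U2d s - V1 s*V1d s - V2 s*V2d s).

Lemma dW s : is_derive W s (Wd s).
Proof.
  unfold W, Wd. eapply D_eq.
  apply (D_minus (fun t => U1 t*U1 t + U2 t*U2 t - V1 t*V1 t) (fun t => V2 t * V2 t)).
  apply (D_minus (fun t => U1 t*U1 t + U2 t*U2 t) (fun t => V1 t * V1 t)).
  apply (D_plus (fun t => U1 t*U1 t) (fun t => U2 t * U2 t)).
  apply D_mult; apply dU1. apply D_mult; apply dU2. apply D_mult; apply dV1. apply D_mult; apply dV2.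
  ring.
Qed.

Lemma W_ode s : s * Wd s + 2*g * W s = -2 * p * s * (V1 s * V1 s + V2 s * V2 s).
Proof.
  unfold Wd, W.
  replace (s * (2 * (U1 s * U1d s + U2 s * U2d s - V1 s * V1d s - V2 s * V2d s)))
    with (2 * (U1 s * (s * U1d s) + U2 s * (s * U2d s) - V1 s * (s * V1d s) - V2 s * (s * V2d s))) by ring.
  rewrite ode1, ode2, ode3, ode4. ring.
Qed.

Lemma W0 : W 0 = 0.
Proof. destruct at0 as (H1&H2&H3&H4&_). unfold W. rewrite H1,H2,H3,H4. ring. Qed.
Lemma Wd0 : Wd 0 = -2 * p / b.
Proof. destruct at0 as (H1&H2&H3&H4&H5&H6&H7&H8). unfold Wd. rewrite H1,H2,H3,H4,H5,H6,H7,H8.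
  field. pose proof bpos; lra. Qed.

Lemma W_pos : p < 0 -> 0 < W 1.
Proof.
  intros Hp. apply (mono (2*g) W Wd dW W0).
  - rewrite Wd0. apply Rdiv_lt_0_compat; [lra|apply bpos].
  - intros s Hs. rewrite W_ode. assert (0 <= V1 s * V1 s + V2 s * V2 s) by nra.
    apply Rmult_le_pos; [|auto]. assert (0 <= -2 * p) by lra. apply Rmult_le_pos; lra.
Qed.

Lemma W_neg : 0 < p -> W 1 < 0.
Proof.
  intros Hp. cut (0 < - W 1); [lra|].
  apply (mono (2*g) (fun t => - W t) (fun t => - Wd t)).
  - intros s. eapply D_eq. eapply is_derive_ext; [|exact (D_scal W s (-1) (Wd s) (dW s))].
    intros t; simpl; ring. ring.
  - rewrite W0; ring.
  - rewrite Wd0. assert (0 < p / b) by (apply Rdiv_lt_0_compat; [lra|apply bpos]).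
    replace (- (-2 * p / b)) with (2 * (p / b)) by (field; pose proof bpos; lra). lra.
  - intros s Hs. pose proof (W_ode s). assert (0 <= V1 s * V1 s + V2 s * V2 s) by nra.
    assert (0 <= 2 * p * s * (V1 s * V1 s + V2 s * V2 s)) by (apply Rmult_le_pos; [apply Rmult_le_pos|]; lra).
    lra.
Qed.

Lemma W_zero : p = 0 -> W 1 = 0.
Proof.
  intros Hp. apply (zero (2*g) W Wd); [lra|apply dW|apply W0| |].
  - rewrite Wd0, Hp. unfold Rdiv. ring.
  - intros s Hs. rewrite W_ode, Hp. ring.
Qed.

Definition L s := s * (V1 s * V1 s + V2 s * V2 s) + (2*g/q) * (V1 s * U2 s - V2 s * U1 s).
Definition Ld s := (V1 s * V1 s + V2 s * V2 s) + s * (2 * (V1 s * V1d s + V2 s * V2d s))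
   + (2*g/q) * (V1d s * U2 s + V1 s * U2d s - (V2d s * U1 s + V2 s * U1d s)).

Lemma dL s : is_derive L s (Ld s).
Proof.
  unfold L, Ld. eapply D_eq.
  apply (D_plus (fun t => t * (V1 t * V1 t + V2 t * V2 t)) (fun t => (2*g/q) * (V1 t * U2 t - V2 t * U1 t))).
  apply (D_mult (fun t => t) (fun t => V1 t * V1 t + V2 t * V2 t)). apply D_id.
  apply (D_plus (fun t => V1 t * V1 t) (fun t => V2 t * V2 t)).
  apply D_mult; apply dV1. apply D_mult; apply dV2.
  apply D_scal.
  apply (D_minus (fun t => V1 t * U2 t) (fun t => V2 t * U1 t)).
  apply D_mult. apply dV1. apply dU2. apply D_mult. apply dV2. apply dU1.
  ring.
Qed.

Lemma L_pos : p = 0 -> q <> 0 -> 0 < L 1.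
Proof.
  intros Hp Hq. apply (mono (2*g) L Ld dL).
  - destruct at0 as (H1&H2&H3&H4&_). unfold L. rewrite H1,H2,H3,H4. field. auto.
  - destruct at0 as (H1&H2&H3&H4&H5&H6&H7&H8). unfold Ld. rewrite H1,H2,H3,H4,H5,H6,H7,H8.
    replace (1 * 1 + 0 * 0 + 0 * (2 * (1 * ((1 + g) / b * p) + 0 * ((1 + g) / b * q))) +
      2 * g / q * ((1 + g) / b * p * 0 + 1 * (g / b * q) - ((1 + g) / b * q * 1 + 0 * (g / b * p))))
      with (1 / b) by (assert (Hb : b = 2*g+1) by reflexivity; rewrite Hb; field; split; [lra|auto]).
    apply Rdiv_lt_0_compat; [lra|apply bpos].
  - intros s Hs.
    assert (E : s * Ld s + 2 * g * L s = s * (V1 s * V1 s + V2 s * V2 s)).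
    { unfold Ld, L.
      replace (s * ((V1 s * V1 s + V2 s * V2 s) + s * (2 * (V1 s * V1d s + V2 s * V2d s))
         + (2*g/q) * (V1d s * U2 s + V1 s * U2d s - (V2d s * U1 s + V2 s * U1d s))))
       with (s * (V1 s * V1 s + V2 s * V2 s) + s * (2 * (V1 s * (s * V1d s) + V2 s * (s * V2d s)))
         + (2*g/q) * ((s * V1d s) * U2 s + V1 s * (s * U2d s) - ((s * V2d s) * U1 s + V2 s * (s * U1d s))))
       by ring.
      rewrite ode1, ode2, ode3, ode4, Hp. field. auto. }
    rewrite E. assert (0 <= V1 s * V1 s + V2 s * V2 s) by nra. apply Rmult_le_pos; lra.
Qed.

End Main.
Lemma Cmod_sq (x y : R) : Cmod (x, y) ^ 2 = x * x + y * y.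
Proof. unfold Cmod. change (fst (x,y)) with x. change (snd (x,y)) with y. rewrite pow2_sqrt by nra. ring. Qed.

Lemma hypU g z : -1/2 < g -> hyp1F1 (RtoC g) (RtoC (2*g+1)) z = (U1 g z 1, U2 g z 1).
Proof. intros. rewrite hyp_eq by lra. reflexivity. Qed.
Lemma hypV g z : -1/2 < g -> hyp1F1 (RtoC (1+g)) (RtoC (2*g+1)) z = (V1 g z 1, V2 g z 1).
Proof. intros. rewrite hyp_eq by lra. reflexivity. Qed.

Lemma part1 g (hg : -1/2 < g) (a : C) : Im a <> 0 ->
  0 < (2 * g + 1) *
      ((Cmod (hyp1F1 (RtoC g) (RtoC (2 * g + 1)) (Cmult Ci a))) ^ 2
       - (Cmod (hyp1F1 (RtoC (1 + g)) (RtoC (2 * g + 1)) (Cmult Ci a))) ^ 2)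
      / (2 * Im a).
Proof.
  intros Ha. set (z := Cmult Ci a).
  assert (Hz : Re z = - Im a) by (unfold z; destruct a; simpl; ring).
  rewrite hypU, hypV, !Cmod_sq by auto.
  assert (E : U1 g z 1 * U1 g z 1 + U2 g z 1 * U2 g z 1 - (V1 g z 1 * V1 g z 1 + V2 g z 1 * V2 g z 1) = W g z 1)
    by (unfold W; ring).
  rewrite E.
  destruct (Rlt_or_le (Im a) 0) as [Hn|Hp].
  - pose proof (W_neg g hg z ltac:(lra)).
    replace ((2 * g + 1) * W g z 1 / (2 * Im a)) with ((2 * g + 1) * (- W g z 1) / (2 * (- Im a))) by (field; lra).
    apply Rdiv_lt_0_compat; [apply Rmult_lt_0_compat|]; lra.
  - assert (0 < Im a) by lra.
    pose proof (W_pos g hg z ltac:(lra)).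
    apply Rdiv_lt_0_compat; [apply Rmult_lt_0_compat|]; lra.
Qed.

Lemma RE_conj z z' : Re z = 0 -> Re z' = 0 -> Im z' = - Im z ->
  forall n, RE z' n = RE z n /\ IM z' n = - IM z n.
Proof.
  intros H1 H2 H3 n. induction n as [|n [IH1 IH2]].
  - rewrite !RE_0, !IM_0. split; ring.
  - rewrite !RE_S, !IM_S, IH1, IH2, H1, H2, H3. split; ring.
Qed.

Lemma PS_one_zero (c : nat -> R) : CV_radius c = p_infty -> c 0%nat = 1 -> (forall n, c (S n) = 0) -> PSeries c 1 = 1.
Proof.
  intros Hr H0 HS. rewrite PSeries_decr_1.
  - rewrite (PSeries_ext (PS_decr_1 c) (fun _ => 0)) by (intros n; apply HS).
    rewrite PSeries_const_0, H0. ring.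
  - apply CV_radius_inside. rewrite Hr. exact I.
Qed.

Lemma hyp_at0 al be z : 0 < be -> Re z = 0 -> Im z = 0 -> hyp1F1 (RtoC al) (RtoC be) z = (1, 0).
Proof.
  intros Hb H1 H2. rewrite hyp_eq by auto. f_equal.
  - apply PS_one_zero. apply entire_RE; auto. rewrite coef_0, RE_0; ring.
    intros n. rewrite RE_S, H1, H2. ring.
  - rewrite (PSeries_ext _ (fun _ => 0)). apply PSeries_const_0.
    intros n. destruct n. rewrite IM_0; ring. rewrite IM_S, H1, H2. ring.
Qed.

Lemma part2 g (hg : -1/2 < g) (a : R) : Im (Tq g a) = 0 /\ 0 < Re (Tq g a).
Proof.
  set (z := Cmult (RtoC a) Ci). set (z' := Cmult (RtoC (-a)) Ci).
  assert (Hz1 : Re z = 0) by (unfold z; simpl; ring).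
  assert (Hz2 : Im z = a) by (unfold z; simpl; ring).
  assert (Hz1' : Re z' = 0) by (unfold z'; simpl; ring).
  assert (Hz2' : Im z' = - a) by (unfold z'; simpl; ring).
  destruct (Req_dec a 0) as [Ha0|Ha0].
  - unfold Tq. fold z z'.
    rewrite !hyp_at0 by lra. simpl. split; ring_simplify; lra.
  - pose proof (RE_conj z z' Hz1 Hz1' ltac:(lra)) as Hc.
    assert (HU' : hyp1F1 (RtoC g) (RtoC (2*g+1)) z' = (U1 g z 1, - U2 g z 1)).
    { rewrite hyp_eq by lra. f_equal.
      - apply PSeries_ext. intros n. rewrite (proj1 (Hc n)). reflexivity.
      - unfold U2. transitivity (-1 * PSeries (uB g z) 1); [|ring]. rewrite <- (PSeries_scal (-1)). apply PSeries_ext. intros n.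
        rewrite (proj2 (Hc n)). unfold PS_scal, uB; simpl. unfold scal; simpl; unfold mult; simpl. ring. }
    assert (HV' : hyp1F1 (RtoC (1+g)) (RtoC (2*g+1)) z' = (V1 g z 1, - V2 g z 1)).
    { rewrite hyp_eq by lra. f_equal.
      - apply PSeries_ext. intros n. rewrite (proj1 (Hc n)). reflexivity.
      - unfold V2. transitivity (-1 * PSeries (vD g z) 1); [|ring]. rewrite <- (PSeries_scal (-1)). apply PSeries_ext. intros n.
        rewrite (proj2 (Hc n)). unfold PS_scal, vD; simpl. unfold scal; simpl; unfold mult; simpl. ring. }
    set (E1 := PSeries (fun n => coef (2+g) (2*g+2) n * RE z n) 1).
    set (E2 := PSeries (fun n => coef (2+g) (2*g+2) n * IM z n) 1).
    set (G1 := PSeries (fun n => coef (1+g) (2*g+2) n * RE z n) 1).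
    set (G2 := PSeries (fun n => coef (1+g) (2*g+2) n * IM z n) 1).
    assert (HE : hyp1F1 (RtoC (2+g)) (RtoC (2*g+2)) z = (E1, E2)) by (apply hyp_eq; lra).
    assert (HG : hyp1F1 (RtoC (1+g)) (RtoC (2*g+2)) z = (G1, G2)) by (apply hyp_eq; lra).
    assert (RE1 : (1+g) * a * E1 = (2*g+1) * V2d g z 1).
    { unfold E1, V2d. rewrite <- PSeries_scal, <- PSeries_scal. apply PSeries_ext. intros n.
      unfold PS_scal, PS_derive, vD; simpl. unfold scal; simpl; unfold mult; simpl.
      rewrite IM_S, Hz1, Hz2. rewrite <- (Rmult_assoc (INR (S n))).
      replace ((1 + g) * a * (coef (2 + g) (2 * g + 2) n * RE z n)) with
        (a * RE z n * ((1 + g) * coef (2 + g) (2 * g + 2) n)) by ring.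
      rewrite I3 by lra. ring. }
    assert (RE2 : (1+g) * a * E2 = - (2*g+1) * V1d g z 1).
    { unfold E2, V1d. rewrite <- PSeries_scal, <- PSeries_scal. apply PSeries_ext. intros n.
      unfold PS_scal, PS_derive, vC; simpl. unfold scal; simpl; unfold mult; simpl.
      rewrite RE_S, Hz1, Hz2. rewrite <- (Rmult_assoc (INR (S n))).
      replace ((1 + g) * a * (coef (2 + g) (2 * g + 2) n * IM z n)) with
        (a * IM z n * ((1 + g) * coef (2 + g) (2 * g + 2) n)) by ring.
      rewrite I3 by lra. ring. }
    assert (RG1 : g * a * G1 = (2*g+1) * U2d g z 1).
    { unfold G1, U2d. rewrite <- PSeries_scal, <- PSeries_scal. apply PSeries_ext. intros n.
      unfold PS_scal, PS_derive, uB; simpl. unfold scal; simpl; unfold mult; simpl.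
      rewrite IM_S, Hz1, Hz2. rewrite <- (Rmult_assoc (INR (S n))).
      replace (g * a * (coef (1 + g) (2 * g + 2) n * RE z n)) with
        (a * RE z n * (g * coef (1 + g) (2 * g + 2) n)) by ring.
      rewrite I4 by lra. ring. }
    assert (RG2 : g * a * G2 = - (2*g+1) * U1d g z 1).
    { unfold G2, U1d. rewrite <- PSeries_scal, <- PSeries_scal. apply PSeries_ext. intros n.
      unfold PS_scal, PS_derive, uA; simpl. unfold scal; simpl; unfold mult; simpl.
      rewrite RE_S, Hz1, Hz2. rewrite <- (Rmult_assoc (INR (S n))).
      replace (g * a * (coef (1 + g) (2 * g + 2) n * IM z n)) with
        (a * IM z n * (g * coef (1 + g) (2 * g + 2) n)) by ring.
      rewrite I4 by lra. ring. }
    unfold Tq. fold z z'.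
    replace (RtoC (1 + g)) with (RtoC (1+g)) by reflexivity.
    rewrite HU', HV', HE, HG. simpl.
    pose proof (ode1 g hg z 1) as O1. pose proof (ode2 g hg z 1) as O2.
    pose proof (ode3 g hg z 1) as O3. pose proof (ode4 g hg z 1) as O4.
    rewrite Hz1, Hz2 in O3, O4.
    pose proof (W_zero g hg z Hz1) as HW. pose proof (L_pos g hg z Hz1 ltac:(lra)) as HL.
    unfold W in HW. unfold L in HL. rewrite Hz2 in HL.
    set (u1 := U1 g z 1) in *. set (u2 := U2 g z 1) in *. set (v1 := V1 g z 1) in *. set (v2 := V2 g z 1) in *.
    set (u1d := U1d g z 1) in *. set (u2d := U2d g z 1) in *. set (v1d := V1d g z 1) in *. set (v2d := V2d g z 1) in *.
    rewrite !Rmult_1_l in O1, O2, O3, O4.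
    split.
    + apply (Rmult_eq_reg_l a); [|auto].
      match goal with |- a * ?X = _ => replace (a * X) with
        (v1 * ((1+g)*a*E2) - v2*((1+g)*a*E1) - u1*(g*a*G2) + u2*(g*a*G1)) by ring end.
      rewrite RE1, RE2, RG1, RG2, O1, O2, O3, O4.
      transitivity (-(2*g+1)*g*(u1*u1+u2*u2-v1*v1-v2*v2)); [ring|rewrite HW; ring].
    + match goal with |- 0 < ?X =>
        assert (Eq : X = (2*g+1) * (1*(v1*v1+v2*v2) + 2*g/a*(v1*u2 - v2*u1))) end.
      { apply (Rmult_eq_reg_l a); [|auto].
        match goal with |- a * ?X = _ => replace (a * X) with
          (v1 * ((1+g)*a*E1) + v2*((1+g)*a*E2) - u1*(g*a*G1) - u2*(g*a*G2)) by ring end.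
        rewrite RE1, RE2, RG1, RG2, O1, O2, O3, O4. field. auto. }
      rewrite Eq. apply Rmult_lt_0_compat; lra.
Qed.

Theorem lemma2p4 (g : R) (hg : -1/2 < g) :
  (forall a : C, Im a <> 0 ->
     0 < (2 * g + 1) *
         ((Cmod (hyp1F1 (RtoC g) (RtoC (2 * g + 1)) (Cmult Ci a))) ^ 2
          - (Cmod (hyp1F1 (RtoC (1 + g)) (RtoC (2 * g + 1)) (Cmult Ci a))) ^ 2)
         / (2 * Im a)) /\
  (forall a : R, Im (Tq g a) = 0 /\ 0 < Re (Tq g a)).
Proof.
  split.
  - intros a Ha. apply part1; auto.
  - intros a. apply part2; auto.
Qed.
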